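(* Let $(M,\circ)$ be a fuzzy $\Gamma$-hypersemigroup, and define for $a,b\in M$, $\gamma\in\Gamma$: $a\ast\gamma\ast b=\{x\in M : (a\circ\gamma\circ b)(x)>0\}$. Then $(M,\ast)$ is a $\Gamma$-hypersemigroup.
   Context: $M,\Gamma$ are nonempty sets; a fuzzy subset of $M$ is a map $M\to[0,1]$. A fuzzy $\Gamma$-hyperoperation assigns to each $(a,\gamma,b)\in M\times\Gamma\times M$ a fuzzy subset $a\circ\gamma\circ b$. For $a\in M$ and fuzzy $\mu$: $(a\circ\gamma\circ\mu)(r)=\bigvee_{t\in M}((a\circ\gamma\circ t)(r)\wedge\mu(t))$ if $\mu\ne0$, else $0$; $(\mu\circ\gamma\circ a)(r)=\bigvee_{t\in M}(\mu(t)\wedge(t\circ\gamma\circ a)(r))$ if $\mu\ne0$, else $0$. $(M,\circ)$ is a fuzzy $\Gamma$-hypersemigroup if $(a\circ\alpha\circ b)\circ\beta\circ c=a\circ\alpha\circ(b\circ\beta\circ c)$ for all $a,b,c\in M$, $\alpha,\beta\in\Gamma$. A $\Gamma$-hypersemigroup is a set $M$ together with, for each $\gamma\in\Gamma$, a map $(x,y)\mapsto x\gamma y\subseteq M$, extended to subsets by $A\gamma B=\bigcup_{a\in A,b\in B}a\gamma b$, satisfying $(x\alpha y)\beta z=x\alpha(y\beta z)$ for all $x,y,z\in M$, $\alpha,\beta\in\Gamma$. *)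

(* Defs.v *)
From HB Require Import structures.
From mathcomp Require Import all_boot all_order all_algebra.
From mathcomp Require Import all_classical all_reals.
Set Implicit Arguments. Unset Strict Implicit. Unset Printing Implicit Defensive.
Import Order.TTheory GRing.Theory Num.Theory.
Local Open Scope classical_set_scope.
Local Open Scope ring_scope.

Definition fuzzy_subset (R : realType) (M : Type) (mu : M -> R) : Prop :=
  forall x, 0 <= mu x <= 1.

Definition fuzzy_Gamma_hyperop (R : realType) (M G : Type)
  (hop : M -> G -> M -> M -> R) : Prop :=
  forall a g b, fuzzy_subset (hop a g b).

Definition fz_left (R : realType) (M G : Type) (hop : M -> G -> M -> M -> R)
  (a : M) (g : G) (mu : M -> R) : M -> R :=
  fun r => if `[< exists t, mu t != 0 >]
           then sup [set Order.min (hop a g t r) (mu t) | t in [set: M]]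
           else 0.

Definition fz_right (R : realType) (M G : Type) (hop : M -> G -> M -> M -> R)
  (mu : M -> R) (g : G) (a : M) : M -> R :=
  fun r => if `[< exists t, mu t != 0 >]
           then sup [set Order.min (mu t) (hop t g a r) | t in [set: M]]
           else 0.

Definition fuzzy_Gamma_hypersemigroup (R : realType) (M G : Type)
  (hop : M -> G -> M -> M -> R) : Prop :=
  fuzzy_Gamma_hyperop hop /\
  forall (a b c : M) (al be : G),
    fz_right hop (hop a al b) be c = fz_left hop a al (hop b be c).

Definition set_hop (M G : Type) (hop : M -> G -> M -> set M)
  (A : set M) (g : G) (B : set M) : set M :=
  \bigcup_(a in A) \bigcup_(b in B) hop a g b.

Definition Gamma_hypersemigroup (M G : Type) (hop : M -> G -> M -> set M) : Prop :=
  forall (x y z : M) (al be : G),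
    set_hop hop (hop x al y) be [set z] = set_hop hop [set x] al (hop y be z).

Definition support_hop (R : realType) (M G : Type) (hop : M -> G -> M -> M -> R)
  : M -> G -> M -> set M :=
  fun a g b => [set x | 0 < hop a g b x].

(* Main.v *)
Require Import Defs.
From mathcomp Require Import all_boot all_order all_algebra.
From mathcomp Require Import all_classical all_reals.
Import Order.TTheory GRing.Theory Num.Theory.
Local Open Scope classical_set_scope.
Local Open Scope ring_scope.

Lemma sup_pos (R : realType) (M : Type) (h : M -> R) :
  inhabited M -> (forall t, 0 <= h t <= 1) ->
  (0 < sup [set h t | t in [set: M]]) <-> exists t, 0 < h t.
Proof.
move=> [m] hb; split.
- move=> Hs; apply/not_existsP => Hn.
  have : sup [set h t | t in [set: M]] <= 0.
    apply: ge_sup; first by exists (h m), m.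
    move=> _ [t _ <-]; rewrite leNgt; apply/negP => Ht; exact: (Hn t).
  by rewrite leNgt Hs.
- move=> [t Ht]; apply: (lt_le_trans Ht); apply: ub_le_sup; last by exists t.
  exists 1 => _ [u _ <-]; by case/andP: (hb u).
Qed.

Lemma fz_pos (R : realType) (M : Type) (f g : M -> R) :
  inhabited M -> (forall t, 0 <= f t <= 1) -> (forall t, 0 <= g t <= 1) ->
  (0 < (if `[< exists t, f t != 0 >]
        then sup [set Order.min (f t) (g t) | t in [set: M]] else 0))
  <-> exists t, 0 < f t /\ 0 < g t.
Proof.
move=> iM hf hg.
case: (asboolP (exists t, f t != 0)) => [_|Hn].
- rewrite sup_pos //.
  + split; move=> [t Ht]; exists t.
    * by move: Ht; rewrite lt_min => /andP.
    * by rewrite lt_min; apply/andP.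
  + move=> t; case/andP: (hf t) => f0 f1; case/andP: (hg t) => g0 g1.
    by rewrite le_min f0 g0 /= ge_min f1.
- rewrite ltxx; split => // -[t [Ht _]]. exfalso; apply: Hn; exists t.
  by rewrite gt_eqF.
Qed.

Lemma fz_pos2 (R : realType) (M : Type) (f g : M -> R) :
  inhabited M -> (forall t, 0 <= f t <= 1) -> (forall t, 0 <= g t <= 1) ->
  (0 < (if `[< exists t, f t != 0 >]
        then sup [set Order.min (g t) (f t) | t in [set: M]] else 0))
  <-> exists t, 0 < f t /\ 0 < g t.
Proof.
move=> iM hf hg.
case: (asboolP (exists t, f t != 0)) => [_|Hn].
- rewrite sup_pos //.
  + split; move=> [t Ht]; exists t.
    * by move: Ht; rewrite lt_min => /andP [] ? ?.
    * by rewrite lt_min; apply/andP; case: Ht.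
  + move=> t; case/andP: (hf t) => f0 f1; case/andP: (hg t) => g0 g1.
    by rewrite le_min f0 g0 /= ge_min f1 orbT.
- rewrite ltxx; split => // -[t [Ht _]]; exfalso; apply: Hn; exists t.
  by rewrite gt_eqF.
Qed.

Theorem theorem4p17 (R : realType) (M G : Type)
  (hop : M -> G -> M -> M -> R) :
  inhabited M -> inhabited G ->
  fuzzy_Gamma_hypersemigroup hop ->
  Gamma_hypersemigroup (support_hop hop).
Proof.
move=> iM _ [Hf Ha] x y z al be; apply/seteqP; split => w.
- move=> [u Hu [v /= -> Hw]].
  have : 0 < fz_right hop (hop x al y) be z w.
    rewrite /fz_right /=; apply: (proj2 (@fz_pos _ _ _ _ iM (Hf x al y) (fun t => Hf t be z w))); by exists u.
  rewrite Ha /fz_left /=.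
  move/(@fz_pos2 _ _ _ _ iM (Hf y be z) (fun t => Hf x al t w)) => [t [H1 H2]].
  by exists x => //; exists t.
- move=> [u /= -> [v Hv Hw]].
  have : 0 < fz_left hop x al (hop y be z) w.
    rewrite /fz_left /=.
    apply/(@fz_pos2 _ _ _ _ iM (Hf y be z) (fun t => Hf x al t w)); by exists v.
  rewrite -Ha /fz_right; move/(@fz_pos _ _ _ _ iM (Hf x al y) (fun t => Hf t be z w)) => [t [H1 H2]].
  by exists t => //; exists z.
Qed.
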